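(* Let $G=(\mathbb Z/a_1\mathbb Z)\times\dots\times(\mathbb Z/a_r\mathbb Z)$ be a finite Abelian group with $N=\exp(G)$ even, and let $f:G\to\mathbb Q$ be rational-valued. Let $2^m$ ($m\ge1$) be the highest power of $2$ dividing $N$ and $\ell=\phi(N/2^m)$. For each $k\ge 1$ let $u_k,v_k\in(\mathbb Z/N\mathbb Z)^\times$ satisfy $2^k\equiv u_k+v_k\pmod N$, chosen so that $u_1=v_1=1$ and $u_{k+\ell}=u_k$, $v_{k+\ell}=v_k$ for all $k\ge m$. For $x\in G$ set $$\widehat A_k=\widehat M_4(f;u_kx,v_kx,-u_kx),\qquad \widehat B_k=\widehat M_6(f;u_kx,v_kx,u_kx,v_kx,-u_{k+1}x).$$ Then for every $x\in\operatorname{supp}(\widehat f)$, $$\widehat f(x)^{2^m(2^\ell-1)}=\frac{\prod_{k=1}^{\ell+m-1}(\widehat B_k/\widehat A_{k+1})^{2^{\ell+m-1-k}}}{\prod_{k=1}^{m-1}(\widehat B_k/\widehat A_{k+1})^{2^{m-1-k}}},$$ all quantities $\widehat A_{k+1}$ appearing being nonzero.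
   Context: Elements of $G$ are tuples with componentwise addition modulo $a_k$; $\exp(G)=\min\{n>0: nx=0\ \forall x\in G\}$; $\phi$ is Euler's phi function; $(\mathbb Z/N\mathbb Z)^\times$ is the set of residues coprime to $N$. Define $\chi(x,y)=\exp\left(2\pi i\sum_{k=1}^r \frac{x[k]y[k]}{a_k}\right)$, $\widehat f(x)=\sum_{y\in G}f(y)\overline{\chi(x,y)}$, $\operatorname{supp}(\widehat f)=\{x:\widehat f(x)\ne0\}$, and the transformed autocorrelations $\widehat M_n(f;x_1,\dots,x_{n-1})=\widehat f(x_1)\cdots\widehat f(x_{n-1})\widehat f(-(x_1+\dots+x_{n-1}))$. *)

(* Defs.v *)
From mathcomp Require Import all_boot all_order all_algebra algC.
Set Implicit Arguments. Unset Strict Implicit. Unset Printing Implicit Defensive.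
Import Order.TTheory GRing.Theory Num.Theory.
Local Open Scope ring_scope.

(* the primitive root exp(2 pi i / n) in algC: n.-root (-1) = exp(i pi / n) *)
Definition zeta (n : nat) : algC := (n.-root (-1)) ^+ 2.

Lemma ord_pos n (i : 'I_n) : (0 < n)%N.
Proof. by apply: leq_ltn_trans (ltn_ord i). Qed.

Definition ord_mod n (i : 'I_n) (m : nat) : 'I_n := Ordinal (ltn_pmod m (ord_pos i)).

Definition grp (r : nat) (a : 'I_r -> nat) := {dffun forall k : 'I_r, 'I_(a k)}.

Definition gadd (r : nat) (a : 'I_r -> nat) (x y : grp a) : grp a :=
  [ffun k => ord_mod (x k) (x k + y k)].
Definition gneg (r : nat) (a : 'I_r -> nat) (x : grp a) : grp a :=
  [ffun k => ord_mod (x k) (a k - x k)].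
(* c x for an integer c >= 0 (residues mod N are represented by nats) *)
Definition gscale (r : nat) (a : 'I_r -> nat) (c : nat) (x : grp a) : grp a :=
  [ffun k => ord_mod (x k) (c * x k)].

Definition is_exponent r (a : 'I_r -> nat) (N : nat) : Prop :=
  [/\ (0 < N)%N,
      (forall (x : grp a) k, (N * x k) %% a k = 0)%N &
      (forall n, (0 < n)%N -> (forall (x : grp a) k, (n * x k) %% a k = 0)%N ->
         (N <= n)%N)].

Definition chi (r : nat) (a : 'I_r -> nat) (x y : grp a) : algC :=
  \prod_(k < r) zeta (a k) ^+ (x k * y k).

Definition fhat (r : nat) (a : 'I_r -> nat) (f : grp a -> rat) (x : grp a) : algC :=
  \sum_(y : grp a) ratr (f y) * (chi x y)^*.

(* transformed autocorrelation  M_n(f; x1, ..., x_(n-1)) with x1 = x, xs = [x2;...] *)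
Definition Mhat (r : nat) (a : 'I_r -> nat) (f : grp a -> rat) (x : grp a) (xs : seq (grp a)) : algC :=
  fhat f x * \prod_(y <- xs) fhat f y * fhat f (gneg (foldl (@gadd r a) x xs)).

(* Main.v *)
Require Import Defs.
From mathcomp Require Import all_boot all_order all_algebra algC algnum.
From mathcomp Require Import zify ring.
Set Implicit Arguments.
Import Order.TTheory GRing.Theory Num.Theory.
Local Open Scope ring_scope.

Section G.
Variables (r : nat) (a : 'I_r -> nat) (N : nat).
Hypothesis HN : forall (x : grp a) k, ((N * x k) %% a k = 0)%N.

Lemma scale_modN (c : nat) (x : grp a) k : (c * x k %% a k = (c %% N) * x k %% a k)%N.
Proof.
by rewrite {1}(divn_eq c N) mulnDl -mulnA -modnDml -modnMmr HN muln0 mod0n add0n.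
Qed.

Lemma gscale_mod c d (x : grp a) : (c = d %[mod N])%N -> gscale c x = gscale d x.
Proof.
move=> cd; apply/ffunP => k; rewrite !ffunE; apply/val_inj => /=.
by rewrite scale_modN cd -scale_modN.
Qed.

Lemma gadd_scale c d (x : grp a) : gadd (gscale c x) (gscale d x) = gscale (c + d) x.
Proof.
apply/ffunP => k; rewrite !ffunE; apply/val_inj => /=.
by rewrite modnDm mulnDl.
Qed.

Lemma gscale1 (x : grp a) : gscale 1 x = x.
Proof.
apply/ffunP => k; rewrite !ffunE; apply/val_inj => /=.
by rewrite mul1n modn_small.
Qed.

Lemma gneg_scale c (x : grp a) : (0 < N)%N -> gneg (gscale c x) = gscale (c * (N - 1)) x.
Proof.
move=> N0; apply/ffunP => k; rewrite !ffunE; apply/val_inj => /=.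

have ak : (0 < a k)%N by apply: leq_ltn_trans (ltn_ord (x k)).
apply/eqP; rewrite -(eqn_modDr (c * x k %% a k)) subnK; last by rewrite ltnW // ltn_pmod.
rewrite modnn modnDmr.
have -> : (c * (N - 1) * x k + c * x k = c * (N * x k))%N.
  by case: N N0 => // n _; rewrite subSS subn0; nia.
by rewrite -modnMmr HN muln0 mod0n.
Qed.
End G.

Lemma zetaK n : (0 < n)%N -> zeta n ^+ n = 1.
Proof. by move=> n0; rewrite /zeta -exprM mulnC exprM rootCK // sqrrN expr1n. Qed.

Section H.
Variables (r : nat) (a : 'I_r -> nat) (N : nat).
Hypothesis Ha : forall k, (0 < a k)%N.
Hypothesis HN : forall (x : grp a) k, ((N * x k) %% a k = 0)%N.

Lemma chi_scale c (x y : grp a) : chi (gscale c x) y = chi x y ^+ c.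
Proof.
rewrite /chi -prodrXl; apply: eq_bigr => k _; rewrite ffunE /=.
rewrite exprM expr_mod ?zetaK // -!exprM; congr (_ ^+ _); lia.
Qed.

Lemma chiN (x y : grp a) : chi x y ^+ N = 1.
Proof.
rewrite /chi -prodrXl; apply: big1 => k _.
by rewrite -exprM -(expr_mod _ (zetaK _ (Ha k))) mulnC mulnA -modnMml HN mod0n expr0.
Qed.

Variable f : grp a -> rat.

Lemma fhat_scale_neq0 c (x : grp a) : coprime c N -> fhat f x != 0 ->
  fhat f (gscale c x) != 0.
Proof.
move=> cN fx; have [s Hs] := Qn_aut_exists cN.
suff <- : s (fhat f x) = fhat f (gscale c x) by rewrite fmorph_eq0.
rewrite /fhat rmorph_sum; apply: eq_bigr => y _.
rewrite rmorphM fmorph_rat chi_scale; congr (_ * _).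
by rewrite Hs ?rmorphXn // -rmorphXn chiN rmorph1.
Qed.
End H.

Lemma tele (g : nat -> algC) n : (forall k, (1 <= k)%N -> g k != 0) -> (1 <= n)%N ->
  \prod_(1 <= k < n) (g k ^+ 2 / g k.+1) ^+ (2 ^ (n - 1 - k)) = g 1 ^+ (2 ^ (n - 1)) / g n.
Proof.
move=> gnz; elim: n => // n IH _.
have [n0|n1] := posnP n.
  by rewrite n0 big_geq // expn0 expr1 divff // gnz.
rewrite big_nat_recr //=.
rewrite (eq_big_nat _ _ (F2 := fun k => ((g k ^+ 2 / g k.+1) ^+ (2 ^ (n - 1 - k))) ^+ 2)); last first.
  move=> k /andP [k1 kn]; rewrite -exprM -expnSr; congr (_ ^+ (2 ^ _)); lia.
rewrite prodrXl IH //.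
have -> : (n.+1 - 1 - n = 0)%N by lia.
have -> : (n.+1 - 1 = (n - 1).+1)%N by lia.
rewrite expn0 expr1 expnSr exprM.
have gn := gnz n n1; have g1 := gnz 1%N (leqnn 1).
field; apply/andP; split => //; apply: gnz; lia.
Qed.

Unset Implicit Arguments.

Theorem theorem5 (r : nat) (a : 'I_r -> nat) (f : grp a -> rat) (N : nat)
    (u v : nat -> nat) :
  (forall k, 0 < a k)%N ->
  is_exponent a N ->
  ~~ odd N ->
  let m := logn 2 N in
  let l := totient (N %/ 2 ^ m) in
  (forall k, 1 <= k -> coprime (u k) N /\ coprime (v k) N /\
                       2 ^ k = u k + v k %[mod N])%N ->
  (u 1 = 1 %[mod N])%N -> (v 1 = 1 %[mod N])%N ->
  (forall k, m <= k -> u (k + l) = u k %[mod N] /\ v (k + l) = v k %[mod N])%N ->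
  forall x : grp a, fhat f x != 0 ->
  let A k := Mhat f (gscale (u k) x) [:: gscale (v k) x; gneg (gscale (u k) x)] in
  let B k := Mhat f (gscale (u k) x)
               [:: gscale (v k) x; gscale (u k) x; gscale (v k) x;
                   gneg (gscale (u k.+1) x)] in
  (forall k, (1 <= k < l + m)%N -> A k.+1 != 0) /\
  fhat f x ^+ (2 ^ m * (2 ^ l - 1)) =
    (\prod_(1 <= k < l + m) (B k / A k.+1) ^+ (2 ^ (l + m - 1 - k)))
    / (\prod_(1 <= k < m) (B k / A k.+1) ^+ (2 ^ (m - 1 - k))).
Proof.
move=> Ha [N0 HN _] Nev m l Huv Hu1 Hv1 Hper x fx A B.
pose h c := fhat f (gscale c x).
pose hn c := fhat f (gscale (c * (N - 1)) x).
have cN1 : coprime (N - 1) N.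
  by case: N N0 {HN Nev m l Huv Hu1 Hv1 Hper A B h hn} => // n _; rewrite subn1 coprimenS.
have hnz c : coprime c N -> h c != 0 by move=> cN; exact: fhat_scale_neq0.
have hnnz c : coprime c N -> hn c != 0.
  by move=> cN; apply: fhat_scale_neq0 => //; rewrite coprimeMl cN.
have hu k : (1 <= k)%N -> h (u k) != 0 by move=> k1; apply: hnz; case: (Huv k k1).
have hv k : (1 <= k)%N -> h (v k) != 0 by move=> k1; apply: hnz; case: (Huv k k1) => _ [].
have hnu k : (1 <= k)%N -> hn (u k) != 0 by move=> k1; apply: hnnz; case: (Huv k k1).
have hnv k : (1 <= k)%N -> hn (v k) != 0 by move=> k1; apply: hnnz; case: (Huv k k1) => _ [].
have HA k : A k = h (u k) * h (v k) * (hn (u k) * hn (v k)).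
  rewrite /A /Mhat !big_cons big_nil /= (gneg_scale _ HN _ _ N0) !gadd_scale.
  rewrite (gneg_scale _ HN _ _ N0).
  rewrite (@gscale_mod _ _ _ HN ((u k + v k + u k * (N - 1)) * (N - 1))%N (v k * (N - 1))%N x); last first.
    rewrite -modnMml -[in RHS]modnMml; congr (_ %% _)%N; congr (_ * _)%N.
    have -> : (u k + v k + u k * (N - 1) = u k * N + v k)%N by case: N N0 {HN Nev m l Huv Hu1 Hv1 Hper A B h hn cN1 hnz hnnz hu hv hnu hnv} => // n _; nia.
    by rewrite modnMDl.
  rewrite /h /hn; ring.
have HB k : (1 <= k)%N -> B k = h (u k) ^+ 2 * h (v k) ^+ 2 * (hn (u k.+1) * hn (v k.+1)).
  move=> k1.
  rewrite /B /Mhat !big_cons big_nil /= (gneg_scale _ HN _ _ N0) !gadd_scale.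
  rewrite (gneg_scale _ HN _ _ N0).
  rewrite (@gscale_mod _ _ _ HN ((u k + v k + u k + v k + u k.+1 * (N - 1)) * (N - 1))%N (v k.+1 * (N - 1))%N x); last first.
    rewrite -modnMml -[in RHS]modnMml; congr (_ %% _)%N; congr (_ * _)%N.
    have e1 : ((u k + v k + u k + v k) %% N = (u k.+1 + v k.+1) %% N)%N.
      have [_ [_ e]] := Huv k k1; have [_ [_ e']] := Huv k.+1 isT.
      have -> : (u k + v k + u k + v k = 2 * (u k + v k))%N by lia.
      by rewrite -modnMmr -e modnMmr -expnS.
    rewrite -modnDml e1 modnDml.
    have -> : (u k.+1 + v k.+1 + u k.+1 * (N - 1) = u k.+1 * N + v k.+1)%N by case: N N0 {HN Nev m l Huv Hu1 Hv1 Hper A B h hn cN1 hnz hnnz hu hv hnu hnv HA e1} => // n _; nia.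
    by rewrite modnMDl.
  rewrite /h /hn; ring.
pose g k := h (u k) * h (v k).
have gnz k : (1 <= k)%N -> g k != 0 by move=> k1; rewrite /g mulf_neq0 ?hu ?hv.
have HBA k : (1 <= k)%N -> B k / A k.+1 = g k ^+ 2 / g k.+1.
  move=> k1; rewrite HA HB // /g.
  have := hu k.+1 isT; have := hv k.+1 isT; have := hnu k.+1 isT; have := hnv k.+1 isT.
  move=> *; field; repeat (apply/andP; split) =>//.
split.
  by move=> k _; rewrite HA !mulf_neq0 ?hu ?hv ?hnu ?hnv.
have m1 : (0 < m)%N by rewrite /m logn_gt0 mem_primes N0 dvdn2 Nev.
rewrite (eq_big_nat _ _ (F2 := fun k => (g k ^+ 2 / g k.+1) ^+ (2 ^ (l + m - 1 - k)))); last first.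
  by move=> k /andP [k1 _] /=; rewrite HBA.
rewrite (eq_big_nat _ _ (m := 1%N) (n := m) (F2 := fun k => (g k ^+ 2 / g k.+1) ^+ (2 ^ (m - 1 - k)))); last first.
  by move=> k /andP [k1 _] /=; rewrite HBA.
rewrite !tele //; last by rewrite addn_gt0 m1 orbT.
have -> : g (l + m)%N = g m.
  have [e1 e2] := Hper m (leqnn m).
  by rewrite /g /h addnC (gscale_mod _ HN _ _ _ e1) (gscale_mod _ HN _ _ _ e2).
have -> : g 1%N = fhat f x ^+ 2.
  by rewrite /g /h (gscale_mod _ HN _ _ _ Hu1) (gscale_mod _ HN _ _ _ Hv1) gscale1.
have gm := gnz m m1.
have [m' em] : exists m', m = m'.+1 by exists m.-1; rewrite prednK.
rewrite em in gm *.
have -> : (l + m'.+1 - 1 = m' + l)%N by lia.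
have -> : (m'.+1 - 1 = m')%N by lia.
have -> : fhat f x ^+ (2 ^ m'.+1 * (2 ^ l - 1)) = ((fhat f x ^+ 2) ^+ (2 ^ m')) ^+ (2 ^ l - 1).
  by rewrite -!exprM expnS mulnA.
rewrite [(2 ^ (m' + l))%N]expnD [in X in X / _ / _]exprM.
set P := (fhat f x ^+ 2) ^+ (2 ^ m').
have Pnz : P != 0 by rewrite /P !expf_neq0.
have -> : (P ^+ (2 ^ l) = P ^+ (2 ^ l - 1) * P).
  by rewrite -exprSr subn1 prednK // expn_gt0.
field; rewrite gm Pnz //.
Qed.
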